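(* Let $X$ be a topological space. The following are equivalent: (1) $X$ is nowhere scattered; (2) $X$ has no nonempty, scattered, locally closed subsets; (3) $X$ has no nonempty, locally closed subset that is $T_1$; (4) $X$ has no locally closed subset containing exactly one element.
   Context: A topological space $X$ is nowhere scattered if no closed subset $C\subseteq X$ contains a point that is isolated relative to $C$. A space is scattered if every nonempty closed subset $C$ contains a point isolated relative to $C$. A subset is locally closed if it is relatively open in some closed subset. Subsets carry the subspace topology. *)

(* Defs.v *)
(* Subsets of a topological space T are [set T];
   subspace-topology notions are written out explicitly in terms of the
   ambient topology (open sets of the subspace S are S `&` V, V open in T;
   closed sets of S are S `&` F, F closed in T). *)
From HB Require Import structures.
From mathcomp Require Import all_boot all_order.
From mathcomp Require Import all_classical all_reals all_analysis.
Export all_boot all_order all_classical all_reals all_analysis.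

Set Implicit Arguments.
Unset Strict Implicit.
Unset Printing Implicit Defensive.

Local Open Scope classical_set_scope.

Section Defs.
Context {T : topologicalType}.

Definition isolated_in (C : set T) (x : T) : Prop :=
  C x /\ exists U : set T, open U /\ U `&` C = [set x].

Definition nowhere_scattered : Prop :=
  forall C : set T, closed C -> forall x, ~ isolated_in C x.

Definition scattered_subset (S : set T) : Prop :=
  forall F : set T, closed F -> S `&` F !=set0 ->
    exists x, isolated_in (S `&` F) x.

Definition locally_closed (A : set T) : Prop :=
  exists F : set T, closed F /\ A `<=` F /\
    exists U : set T, open U /\ A = U `&` F.

Definition T1_subset (S : set T) : Prop :=
  forall x y, S x -> S y -> x <> y ->
    exists U : set T, open U /\ U x /\ ~ U y.

End Defs.

(* Main.v *)
Require Import Defs.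
From mathcomp Require Import all_boot all_order.
From mathcomp Require Import all_classical all_reals all_analysis.

Local Open Scope classical_set_scope.

Section Helpers.
Context {T : topologicalType}.

Lemma iso_lc (C : set T) x : closed C -> isolated_in C x -> locally_closed [set x].
Proof.
move=> cC [Cx [U [oU UC]]]; exists C; split => //; split.
  by move=> z ->.
by exists U; split.
Qed.

Lemma lc_iso (x : T) : locally_closed [set x] -> exists C : set T, closed C /\ isolated_in C x.
Proof.
move=> [F [cF [sF [U [oU e]]]]]; exists F; split => //; split.
  exact: sF.
by exists U; split.
Qed.

Lemma sing_scat (x : T) : scattered_subset [set x].
Proof.
move=> F cF [y [/= -> Fx]]; exists x; split; first by split.
exists setT; split; first exact: openT.
apply/seteqP; split => z /=; first by move=> [_ [->]].
by move=> ->; split => //; split.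
Qed.

Lemma sing_T1 (x : T) : T1_subset [set x].
Proof. by move=> a b /= -> ->. Qed.

Lemma scat_lc (A : set T) : A !=set0 -> scattered_subset A -> locally_closed A ->
  exists (C : set T) x, closed C /\ isolated_in C x.
Proof.
move=> A0 sA [F [cF [sF [U [oU e]]]]].
have AF : A `&` F = A by apply/seteqP; split => z /=; [case | move=> Az; split => //; exact: sF].
have AF0 : A `&` F !=set0 by rewrite AF.
have [x [Ax [V [oV VA]]]] := sA F cF AF0.
rewrite AF in Ax VA.
exists F, x; split => //; split; first exact: sF.
exists (V `&` U); split; first exact: openI.
by rewrite -setIA -e.
Qed.

Lemma T1_lc (A : set T) : A !=set0 -> locally_closed A -> T1_subset A ->
  exists x : T, locally_closed [set x].
Proof.
move=> [a Aa] [F [cF [sF [U [oU e]]]]] t1; exists a.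
exists (F `&` closure [set a]); split.
  apply: closedI => //; exact: closed_closure.
split.
  move=> z /= ->; split; [exact: sF | exact: subset_closure].
exists U; split => //.
apply/seteqP; split => z /=.
  move=> ->; have : A a by [].
  rewrite e => -[Ua Fa]; split => //; split => //; exact: subset_closure.
move=> [Uz [Fz cz]].
have Az : A z by rewrite e.
apply: contrapT => za.
have [V [oV [Vz Va]]] := t1 z a Az Aa za.
have [w [/= -> Vw]] := cz V (open_nbhs_nbhs (conj oV Vz)).
exact: Va.
Qed.

End Helpers.

Theorem mainTheorem10 (T : topologicalType) :
  [<-> @nowhere_scattered T;
       ~ (exists A : set T, A !=set0 /\ scattered_subset A /\ locally_closed A);
       ~ (exists A : set T, A !=set0 /\ locally_closed A /\ T1_subset A);
       ~ (exists A : set T, locally_closed A /\ exists x : T, A = [set x])].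
Proof.
tfae.
- move=> ns [A [A0 [sA lA]]].
  have [C [x [cC ix]]] := @scat_lc T A A0 sA lA.
  exact: (ns C cC x ix).
- move=> h [A [A0 [lA tA]]]; apply: h.
  have [x lx] := @T1_lc T A A0 lA tA.
  exists [set x]; split; first by exists x.
  split; [exact: sing_scat | exact: lx].
- move=> h [A [lA [x ex]]]; apply: h; subst A.
  exists [set x]; split; first by exists x.
  split; [exact: lA | exact: sing_T1].
- move=> h C cC x ix; apply: h.
  exists [set x]; split; last by exists x.
  exact: (@iso_lc T C x cC ix).
Qed.
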